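(* Let $G=(V,E)$ be a finite graph and suppose that both $I_1,\dots,I_d$ and $\bar I_1,\dots,\bar I_{\bar d}$ are partitions of $V$ into maximal independent sets characterizing $G$ as a mean valid graph, with $M_s=|I_s|$, $\bar M_s=|\bar I_s|$, $M_1\ge\dots\ge M_d$ and $\bar M_1\ge\dots\ge\bar M_{\bar d}$. Then $d=\bar d$ and $M_s=\bar M_s$ for all $s\in\{1,\dots,d\}$.
   Context: A partition $V=I_1\sqcup\dots\sqcup I_d$ ($d\ge2$) of the vertex set into pairwise disjoint maximal independent sets, ordered with $M_1\ge\dots\ge M_d$ where $M_s=|I_s|$, characterizes $G$ as a mean valid graph if every independent set $I$ of $G$ satisfies $\sum_{s=1}^d|I\cap I_s|/M_s\le1$. *)

(* Defs.v *)
From mathcomp Require Import all_boot all_order all_algebra.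
Set Implicit Arguments. Unset Strict Implicit. Unset Printing Implicit Defensive.
Import Order.TTheory GRing.Theory Num.Theory.

(* A finite simple graph: vertex type T (finite), adjacency e : rel T,
   assumed symmetric and irreflexive in the theorem. *)

Definition independent (T : finType) (e : rel T) (A : {set T}) : bool :=
  [forall x in A, forall y in A, ~~ e x y].

Definition max_independent (T : finType) (e : rel T) (A : {set T}) : bool :=
  maxset (independent e) A.

(* I : 'I_d -> {set T} is a partition of V = T into pairwise disjoint
   (nonempty) maximal independent sets, ordered by nonincreasing size
   (index s : 'I_d corresponds to the paper's s+1). *)
Definition mis_partition (T : finType) (e : rel T) (d : nat)
    (I : 'I_d -> {set T}) : Prop :=
  [/\ (forall s, max_independent e (I s)),
      (forall s, I s != set0),
      (forall s t, s != t -> [disjoint I s & I t]),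
      (\bigcup_(s < d) I s = [set: T]) &
      (forall s t : 'I_d, (s <= t)%N -> (#|I t| <= #|I s|)%N)].

Definition mean_valid_partition (T : finType) (e : rel T) (d : nat)
    (I : 'I_d -> {set T}) : Prop :=
  [/\ (2 <= d)%N, mis_partition e I &
      forall J : {set T}, independent e J ->
        (\sum_(s < d) ((#|J :&: I s|)%:R / (#|I s|)%:R) <= (1 : rat))%R].

(* Main.v *)
Require Import Defs.
From mathcomp Require Import all_boot all_order all_algebra.
From mathcomp Require Import ring lra.
Set Implicit Arguments. Unset Strict Implicit. Unset Printing Implicit Defensive.
Import Order.TTheory GRing.Theory Num.Theory.

Lemma card_split (T : finType) n (B : 'I_n -> {set T}) (A : {set T}) :
  (forall s t, s != t -> [disjoint B s & B t]) -> \bigcup_(s < n) B s = setT ->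
  #|A| = \sum_s #|B s :&: A|.
Proof.
move=> dis cov.
have disF : forall i j, i != j -> [disjoint B i :&: A & B j :&: A].
  move=> i j /dis; rewrite -!setI_eq0 => /eqP H.
  by rewrite setIACA setIid H set0I.
have eqA : \bigcup_s (B s :&: A) = A.
  by rewrite -big_distrl /= cov setTI.
rewrite -sum1_card -{1}eqA (partition_disjoint_bigcup _ _ disF).
by apply: eq_bigr => i _; rewrite sum1_card.
Qed.

Local Open Scope ring_scope.

Lemma key d (x c : 'I_d -> rat) (k : nat) :
 (forall s, 0 <= x s) -> (forall s t : 'I_d, (s <= t)%N -> x t <= x s) ->
 (forall s, 0 <= c s <= 1) -> \sum_s c s <= \sum_(s < d | (s < k)%N) 1 ->
 \sum_s c s * x s <= \sum_(s < d | (s < k)%N) x s.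
Proof.
move=> x0 xdec c01 csum.
case: (ltnP k d) => kd; last first.
  have -> : \sum_(s < d | (s < k)%N) x s = \sum_s x s.
    by apply: eq_bigl => s; rewrite (leq_trans (ltn_ord s) kd).
  apply: ler_sum => s _; have := c01 s; have := x0 s; move=> h1 /andP[h2 h3]; nra.
pose m := x (Ordinal kd).
rewrite -subr_ge0.
have -> : \sum_(s < d | (s < k)%N) x s - \sum_s c s * x s
   = \sum_(s < d) ((if (s < k)%N then x s else 0) - c s * x s).
  by rewrite sumrB big_mkcond.
apply: le_trans (_ : 0 <= m * (\sum_(s < d | (s < k)%N) 1 - \sum_s c s)) _.
  apply: mulr_ge0; first exact: x0.
  by rewrite subr_ge0.
rewrite mulrBr big_mkcond /= !mulr_sumr -sumrB.
apply: ler_sum => s _.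
have := c01 s; move=> /andP[h2 h3].
case: ifP => sk.
  have : m <= x s by apply: xdec; rewrite /= ltnW.
  move=> h; nra.
have : x s <= m by apply: xdec; rewrite /= leqNgt sk.
move=> h; nra.
Qed.

Lemma dimle (T : finType) (e : rel T) d d' (I : 'I_d -> {set T}) (I' : 'I_d' -> {set T}) :
  mean_valid_partition e I -> mean_valid_partition e I' -> (d <= d')%N.
Proof.
case=> _ [_ Hne _ _ _] Hmv; case=> _ [Hmax' _ Hdis' Hcov' _] _.
have x0 s : (#|I s|%:R : rat) != 0 by rewrite pnatr_eq0 -lt0n card_gt0 Hne.
rewrite -(ler_nat rat).
have -> : (d%:R : rat) = \sum_(s < d) (#|I s|%:R / #|I s|%:R).
  transitivity (\sum_(s < d) (1 : rat)); first by rewrite sumr_const card_ord.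
  by apply: eq_bigr => s _; rewrite divff.
have -> : (d'%:R : rat) = \sum_(t < d') 1 by rewrite sumr_const card_ord.
under eq_bigr => s _ do rewrite [X in X%:R / _](card_split (I s) Hdis' Hcov') natr_sum mulr_suml.
rewrite exchange_big /=; apply: ler_sum => t _.
exact: Hmv _ (maxsetp (Hmax' t)).
Qed.

Lemma half (T : finType) (e : rel T) d (I I' : 'I_d -> {set T}) :
  mean_valid_partition e I -> mean_valid_partition e I' -> forall k,
  \sum_(t < d | (t < k)%N) (#|I' t|%:R : rat) <= \sum_(s < d | (s < k)%N) #|I s|%:R.
Proof.
move=> [_ [Hmax Hne Hdis Hcov Hsort] Hmv] [_ [Hmax' _ Hdis' Hcov' _] _] k.
have x0 s : (#|I s|%:R : rat) != 0 by rewrite pnatr_eq0 -lt0n card_gt0 Hne.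
pose x s := (#|I s|%:R : rat).
pose a t s := (#|I' t :&: I s|%:R : rat).
pose c s := (\sum_(t < d | (t < k)%N) a t s) / x s.
have xa s : x s = \sum_t a t s.
  by rewrite /x (card_split (I s) Hdis' Hcov') natr_sum.
have -> : \sum_(t < d | (t < k)%N) (#|I' t|%:R : rat) = \sum_s c s * x s.
  transitivity (\sum_(t < d | (t < k)%N) \sum_s a t s).
    apply: eq_bigr => t _; rewrite (card_split (I' t) Hdis Hcov) natr_sum.
    by apply: eq_bigr => s _; rewrite /a setIC.
  rewrite exchange_big /=; apply: eq_bigr => s _.
  by rewrite /c divfK //; apply: x0.
apply: key.
- by move=> s; rewrite /x ler0n.
- by move=> s t st; rewrite /x ler_nat; apply: Hsort.
- move=> s; apply/andP; split.
    by rewrite /c divr_ge0 // ?sumr_ge0 // => t _; rewrite /a ler0n.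
  have xp : 0 < x s by rewrite lt_def x0 /x ler0n.
  rewrite /c ler_pdivrMr // mul1r xa big_mkcond /=.
  by apply: ler_sum => t _; case: ifP => _ //=; rewrite /a ler0n.
- rewrite /c; under eq_bigr => s _ do rewrite mulr_suml.
  rewrite exchange_big /=; apply: ler_sum => t _.
  exact: Hmv _ (maxsetp (Hmax' t)).
Qed.

Lemma pref d (f : 'I_d -> rat) (s : 'I_d) :
  \sum_(t < d | (t < s.+1)%N) f t = \sum_(t < d | (t < s)%N) f t + f s.
Proof.
rewrite (bigD1 s) //= addrC; congr (_ + _); apply: eq_bigl => t.
by rewrite ltnS (ltn_neqAle t s) andbC.
Qed.

Theorem lemma9 (T : finType) (e : rel T)
    (e_sym : symmetric e) (e_irr : irreflexive e)
    (d d' : nat) (I : 'I_d -> {set T}) (I' : 'I_d' -> {set T}) :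
  mean_valid_partition e I -> mean_valid_partition e I' ->
  d = d' /\
  (forall (s : 'I_d) (s' : 'I_d'), nat_of_ord s = nat_of_ord s' ->
     #|I s| = #|I' s'|).
Proof.
move=> H H'.
have dd : d = d' by apply/eqP; rewrite eqn_leq (dimle H H') (dimle H' H).
subst d'; split=> // s s' ss'.
have -> : s' = s by apply: val_inj.
have P k : \sum_(t < d | (t < k)%N) (#|I t|%:R : rat) =
           \sum_(t < d | (t < k)%N) (#|I' t|%:R : rat).
  by apply/le_anti; rewrite (half H H') (half H' H).
apply/eqP; rewrite -(eqr_nat rat); apply/eqP.
have := P s.+1; rewrite !pref P => /addrI.
done.
Qed.
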